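(* Let $\alpha,\beta$ be words over $X$ such that $\alpha\beta$ has no repeated letters, $|\alpha|$ is even, and $|\beta|=2n$ with $n\ge1$. Then $$f[\alpha]\,f[\alpha\beta]^{\,n-1}=\sum s(\beta,x_1y_1\ldots x_ny_n)\,f[(\alpha\beta)\setminus x_1y_1]\,f[(\alpha\beta)\setminus x_2y_2]\cdots f[(\alpha\beta)\setminus x_ny_n].$$ The sum is over all perfect matchings $\{x_1,y_1\},\ldots,\{x_n,y_n\}$ of the set of letters of $\beta$, each matching counted once.
   Context: Setting. Let $X$ be a set and $R$ a commutative ring. Let $f$ assign to each ordered pair $(x,y)\in X\times X$ an element $f[xy]\in R$, subject to $f[xy]=-f[yx]$ and $f[xx]=0$ for all $x,y\in X$. Words. A word is a finite sequence of elements (letters) of $X$. Concatenation is written by juxtaposition, $\epsilon$ is the empty word, and $|\alpha|$ is the length of $\alpha$. For words $\alpha,\beta$, the word $\alpha\setminus\beta$ is obtained from $\alpha$ by deleting every letter that occurs in $\beta$. Sign. For words $\alpha,\beta$, set $s(\alpha,\beta)=0$ if $\alpha$ or $\beta$ has a repeated letter, or if $\beta$ contains a letter not in $\alpha$. Otherwise $s(\alpha,\beta)\in\{\pm1\}$ is the sign of the permutation that rearranges $\alpha$ into the word $\beta(\alpha\setminus\beta)$. Pfaffian. Let $\alpha=x_1\ldots x_{2n}$ be a word with distinct letters. Then $$f[\alpha]=\sum s(\alpha,y_1\ldots y_{2n})\,f[y_1y_2]\cdots f[y_{2n-1}y_{2n}],$$ where the sum is over the $(2n-1)(2n-3)\cdots1$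 partitions of $\{x_1,\ldots,x_{2n}\}$ into pairs $\{y_1,y_2\},\ldots,\{y_{2n-1},y_{2n}\}$. Each term does not depend on the order in which the pairs or their elements are listed. Further conventions: $f[\epsilon]=1$; $f[\alpha]=0$ if $\alpha$ has a repeated letter; and $f[\alpha]=0$ if $|\alpha|$ is odd. *)

(* Defs.v *)
From mathcomp Require Import all_boot all_algebra.
Set Implicit Arguments. Unset Strict Implicit. Unset Printing Implicit Defensive.
Import GRing.Theory.
Local Open Scope ring_scope.

Section Pfaff.
Variables (X : eqType) (R : comPzRingType).

Definition wminus (a b : seq X) : seq X := [seq x <- a | x \notin b].

Fixpoint inversions (a w : seq X) : nat :=
  if w is x :: w' then
    (count (fun y => index y a < index x a)%N w' + inversions a w')%N
  else 0%N.

Definition sgn (a b : seq X) : R :=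
  if uniq a && uniq b && all (fun y => y \in a) b
  then (-1) ^+ inversions a (b ++ wminus a b) else 0.

(* Enumeration of perfect matchings of the letters of a word (each matching
   exactly once), each output as a word y1 y2 ... y_{2n} whose consecutive
   pairs are the blocks: the first letter is paired with each other letter,
   and one recurses on the rest. [k] is fuel (at least the length). *)
Fixpoint matchings_aux (k : nat) (a : seq X) : seq (seq X) :=
  if k is k'.+1 then
    if a is x :: s then
      flatten [seq [seq x :: y :: m | m <- matchings_aux k' (rem y s)] | y <- s]
    else [:: [::]]
  else [:: [::]].

Definition matchings (a : seq X) : seq (seq X) := matchings_aux (size a) a.

Fixpoint pairs_of (w : seq X) : seq (X * X) :=
  if w is x :: y :: w' then (x, y) :: pairs_of w' else [::].

Definition pf (f : X -> X -> R) (a : seq X) : R :=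
  if uniq a && ~~ odd (size a) then
    \sum_(m <- matchings a) sgn a m * \prod_(p <- pairs_of m) f p.1 p.2
  else 0.

End Pfaff.

(* Main.v *)
From mathcomp Require Import all_boot all_algebra.
Require Import Defs.
From mathcomp Require Import zify ring.
Set Implicit Arguments. Unset Strict Implicit. Unset Printing Implicit Defensive.
Import GRing.Theory.
Local Open Scope ring_scope.

Section Dev.
Variables (X : eqType) (R : comPzRingType).

Fixpoint ex (F : X -> seq X -> R) (s : seq X) : R :=
  if s is y :: v then F y v - ex (fun z w => F z (y :: w)) v else 0.

Lemma ex_ext F G s : (forall y r, F y r = G y r) -> ex F s = ex G s.
Proof.
elim: s F G => [|y s IH] F G H //=.
by rewrite H (IH _ (fun z w => G z (y :: w))).
Qed.

Lemma ex0 s : ex (fun _ _ => 0) s = 0.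
Proof.
elim: s => [|y s IH] //=.
by rewrite IH subr0.
Qed.

Lemma ex_add F G s : ex (fun y r => F y r + G y r) s = ex F s + ex G s.
Proof.
elim: s F G => [|y s IH] F G /=; first by rewrite addr0.
rewrite (IH (fun z w => F z (y :: w)) (fun z w => G z (y :: w))).
by rewrite opprD addrACA.
Qed.

Lemma ex_opp F s : ex (fun y r => - F y r) s = - ex F s.
Proof.
elim: s F => [|y s IH] F /=; first by rewrite oppr0.
by rewrite (IH (fun z w => F z (y :: w))) opprD.
Qed.

Lemma ex_mull c F s : ex (fun y r => c * F y r) s = c * ex F s.
Proof.
elim: s F => [|y s IH] F /=; first by rewrite mulr0.
by rewrite (IH (fun z w => F z (y :: w))) mulrBr.
Qed.

Lemma ex_mulr c F s : ex (fun y r => F y r * c) s = ex F s * c.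
Proof.
rewrite mulrC -ex_mull; apply: ex_ext => y r; exact: mulrC.
Qed.

Lemma ex_split F G s :
  (forall u y v, s = u ++ y :: v -> F y (u ++ v) = G y (u ++ v)) -> ex F s = ex G s.
Proof.
elim: s F G => [|a s IH] F G H //=.
rewrite (H [::] a s) //; congr (_ - _).
apply: IH => u y v E.
by apply: (H (a :: u)); rewrite E.
Qed.

Lemma ex_cat F p q :
  ex F (p ++ q) = ex (fun y r => F y (r ++ q)) p
                  + (-1) ^+ size p * ex (fun y r => F y (p ++ r)) q.
Proof.
elim: p F => [|a p IH] F /=; first by rewrite add0r expr0 mul1r.
rewrite (IH (fun z w => F z (a :: w))) exprS.
ring.
Qed.

Lemma ex_index F s : uniq s ->
  ex F s = \sum_(y <- s) (-1) ^+ (index y s) * F y (rem y s).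
Proof.
elim: s F => [|a s IH] F /=; first by rewrite big_nil.
case/andP=> as_ us.
rewrite (IH (fun z w => F z (a :: w))) // big_cons /= eqxx expr0 mul1r.
congr (_ + _); rewrite -sumrN; apply: eq_big_seq => y ys.
have ya : (a == y) = false by apply/negbTE; apply: contraNneq as_ => ->.
by rewrite ya exprS mulN1r mulNr.
Qed.

Lemma ex_exchange (H : X -> seq X -> X -> seq X -> R) A B :
  ex (fun y r => ex (fun z r' => H y r z r') A) B =
  ex (fun z r' => ex (fun y r => H y r z r') B) A.
Proof.
elim: B H => [|b B IH] H /=; first by rewrite ex0.
rewrite (IH (fun y r z r' => H y (b :: r) z r')).
rewrite -ex_opp -ex_add; apply: ex_ext => z r'; by [].
Qed.

Lemma exD_anti (F : X -> X -> seq X -> R) q :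
  ex (fun w r => ex (fun w' r' => F w w' r') r) q =
  - ex (fun w r => ex (fun w' r' => F w' w r') r) q.
Proof.
elim: q F => [|v q IH] F /=; first by rewrite oppr0.
have E1 : forall (G : X -> X -> seq X -> R),
   ex (fun z w => ex (fun w' r' => G z w' r') (v :: w)) q =
   ex (fun z w => G z v w) q - ex (fun z w => ex (fun w' r' => G z w' (v :: r')) w) q.
  by move=> G; rewrite -ex_opp -ex_add; apply: ex_ext.
rewrite E1 (E1 (fun w w' r' => F w' w r')).
rewrite (IH (fun w w' r' => F w w' (v :: r'))).
ring.
Qed.

Lemma exD_sym (F : X -> X -> seq X -> R) q :
  (forall w w' r, F w w' r = F w' w r) ->
  ex (fun w r => ex (fun w' r' => F w w' r') r) q = 0.
Proof.
elim: q F => [|v q IH] F HF //=.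
have E1 : ex (fun z w => ex (fun w' r' => F z w' r') (v :: w)) q =
   ex (fun z w => F z v w) q - ex (fun z w => ex (fun w' r' => F z w' (v :: r')) w) q.
  by rewrite -ex_opp -ex_add; apply: ex_ext.
rewrite E1 (IH (fun w w' r' => F w w' (v :: r'))); last by move=> *; apply: HF.
rewrite subr0 (ex_ext (G := fun z w => F v z w)) ?subrr // => *; exact: HF.
Qed.


Fixpoint Pk (g : X -> X -> R) (k : nat) (l : seq X) : R :=
  if l is x :: s then
    (if k is k'.+1 then ex (fun y r => g x y * Pk g k' r) s else 0)
  else 1.

Definition P g l := Pk g (size l) l.

Lemma ex_size F G s :
  (forall y r, (size r < size s)%N -> F y r = G y r) -> ex F s = ex G s.
Proof.
move=> H; apply: ex_split => u y v E; apply: H.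
by rewrite E !size_cat /= addnS ltnS leqnn.
Qed.

Lemma Pk_eq_gen g n l k1 k2 : (size l <= n)%N -> (size l <= k1)%N ->
  (size l <= k2)%N -> Pk g k1 l = Pk g k2 l.
Proof.
elim: n l k1 k2 => [|n IH] [|x s] [|k1] [|k2] //= Hn H1 H2.
apply: ex_size => y r Hr; congr (_ * _); apply: IH.
- by apply: leq_trans (ltnW Hr) _.
- by apply: leq_trans (ltnW Hr) _.
- by apply: leq_trans (ltnW Hr) _.
Qed.

Lemma Pk_eq g k l : (size l <= k)%N -> Pk g k l = P g l.
Proof. by move=> H; apply: (@Pk_eq_gen g (size l)). Qed.

Lemma P_nil g : P g [::] = 1.
Proof. by []. Qed.

Lemma P_cons g x s : P g (x :: s) = ex (fun y r => g x y * P g r) s.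
Proof.
rewrite /P /=; apply: ex_size => y r Hr; rewrite Pk_eq //; exact: ltnW.
Qed.

Lemma P_ext g h l : (forall c d, g c d = h c d) -> P g l = P h l.
Proof.
move=> H; elim: {l}(size l) {-2}l (leqnn (size l)) => [|n IH] [|x s] //= Hs.
rewrite !P_cons; apply: ex_size => y r Hr; rewrite H IH //.
by move: Hr Hs; lia.
Qed.

Lemma P_odd g l : odd (size l) -> P g l = 0.
Proof.
elim: {l}(size l) {-2}l (leqnn (size l)) => [|n IH] [|x s] //= Hs Ho.
rewrite P_cons -(ex0 s); apply: ex_split => u y v E.
rewrite IH ?mulr0 //.
  by move: Hs; rewrite E !size_cat /=; lia.
by move: Ho; rewrite E !size_cat /= addnS /= negbK.
Qed.


Lemma ex_swap F p y z q :
  (forall w u r, (size u + size r).+1 = (size p + size q)%N ->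
     F w (u ++ z :: y :: r) = - F w (u ++ y :: z :: r)) ->
  ex F (p ++ z :: y :: q) = - ex F (p ++ y :: z :: q).
Proof.
elim: p F => [|x p IH] F H /=.
  rewrite (@ex_split _ (fun w r => - F w (y :: z :: r)) q).
    by rewrite ex_opp; ring.
  move=> u w v E; apply: (H w [::]); rewrite E !size_cat /=; lia.
rewrite (H x p q) //.
rewrite (IH (fun w r => F w (x :: r))); first by ring.
move=> w u r Hs; apply: (H w (x :: u)); move: Hs => /=; lia.
Qed.

Lemma ex_rep F p y q :
  (forall w u r, (size u + size r).+1 = (size p + size q)%N ->
     F w (u ++ y :: y :: r) = 0) ->
  ex F (p ++ y :: y :: q) = 0.
Proof.
elim: p F => [|x p IH] F H /=.
  rewrite (@ex_split _ (fun w r => 0) q) ?ex0; first by ring.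
  move=> u w v E; apply: (H w [::]); rewrite E !size_cat /=; lia.
rewrite (H x p q) // (IH (fun w r => F w (x :: r))); first by ring.
move=> w u r Hs; apply: (H w (x :: u)); move: Hs => /=; lia.
Qed.

Section Anti.
Variable g : X -> X -> R.
Hypothesis g_anti : forall x y, g x y = - g y x.
Hypothesis g_diag : forall x, g x x = 0.

Lemma P_swap_front y z q : P g (z :: y :: q) = - P g (y :: z :: q).
Proof.
have E : forall y z, P g (y :: z :: q) = g y z * P g q -
   ex (fun w r => ex (fun w' r' => g y w * (g z w' * P g r')) r) q.
  move=> y1 z1; rewrite P_cons /=; congr (_ - _); apply: ex_ext => w r.
  by rewrite P_cons ex_mull.
rewrite !E exD_anti.
rewrite (@ex_ext _ (fun w r => ex (fun w' r' => g y w * (g z w' * P g r')) r) q).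
  by rewrite (g_anti z y); ring.
move=> w r; apply: ex_ext => w' r'; ring.
Qed.

Lemma P_swap N p y z q : (size (p ++ y :: z :: q) <= N)%N ->
  P g (p ++ z :: y :: q) = - P g (p ++ y :: z :: q).
Proof.
elim: N p y z q => [|N IH] [|x p] y z q //=; rewrite ?size_cat //= => Hs.
  exact: P_swap_front.
rewrite !P_cons; apply: ex_swap => w u r Hur.
rewrite (IH u y z r) ?mulrN //.
rewrite size_cat /=; move: Hs; lia.
Qed.

Lemma P_rep_front y q : P g (y :: y :: q) = 0.
Proof.
rewrite P_cons /= g_diag mul0r sub0r.
rewrite (@ex_ext _ (fun w r => ex (fun w' r' => g y w * (g y w' * P g r')) r)).
  by rewrite exD_sym ?oppr0 // => *; ring.
by move=> w r; rewrite P_cons ex_mull.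
Qed.

Lemma P_rep N p y q : (size (p ++ y :: y :: q) <= N)%N ->
  P g (p ++ y :: y :: q) = 0.
Proof.
elim: N p y q => [|N IH] [|x p] y q //=; rewrite ?size_cat //= => Hs.
  exact: P_rep_front.
rewrite !P_cons; apply: ex_rep => w u r Hur.
rewrite (IH u y r) ?mulr0 //.
rewrite size_cat /=; move: Hs; lia.
Qed.

Lemma P_move p u y v :
  P g (p ++ u ++ y :: v) = (-1) ^+ size u * P g (p ++ y :: u ++ v).
Proof.
elim: u p => [|w u IH] p /=; first by rewrite expr0 mul1r.
have -> : p ++ w :: u ++ y :: v = (p ++ [:: w]) ++ u ++ y :: v by rewrite -catA.
rewrite IH -catA /= (@P_swap (size (p ++ y :: w :: u ++ v))) //.
by rewrite exprS; ring.
Qed.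

Lemma P_mem_dup p y r : y \in p -> P g (p ++ y :: r) = 0.
Proof.
case/splitPr=> p1 p2.
have -> : (p1 ++ y :: p2) ++ y :: r = (p1 ++ [:: y]) ++ p2 ++ y :: r by rewrite -!catA.
rewrite P_move -catA /= (@P_rep (size (p1 ++ y :: y :: p2 ++ r))) ?mulr0 //.
Qed.

End Anti.


Definition L g A B := ex (fun y r => P g (A ++ [:: y]) * P g r) B.

Lemma sign_cancel m k : odd (m + k) -> (-1) ^+ m + (-1) ^+ k = 0 :> R.
Proof.
rewrite oddD -(signr_odd _ m) -(signr_odd _ k).
by case: (odd m); case: (odd k) => //= _; rewrite ?expr0 ?expr1 ?subrr ?addrN // addNr.
Qed.

Section Anti2.
Variable g : X -> X -> R.
Hypothesis g_anti : forall x y, g x y = - g y x.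

Lemma PL N A B : (size A <= N)%N -> ~~ odd (size A + size B) ->
  L g A B + L g B A = 0.
Proof.
elim: N A B => [|N IH] [|a A'] B //= HA Hodd.
- rewrite /L /= addr0 -(ex0 B); apply: ex_ext => y r.
  by rewrite P_cons /= mul0r.
- rewrite /L /= addr0 -(ex0 B); apply: ex_ext => y r.
  by rewrite P_cons /= mul0r.
have E1 : forall y, P g (a :: A' ++ [:: y]) =
   ex (fun z r => g a z * P g (r ++ [:: y])) A' + (-1) ^+ size A' * (g a y * P g A').
  by move=> y; rewrite P_cons ex_cat /= subr0 cats0.
have HL1 : L g (a :: A') B = ex (fun z r2 => g a z * L g r2 B) A'
                  + (-1) ^+ size A' * P g A' * P g (a :: B).
  rewrite /L /= (@ex_ext _ (fun y r => ex (fun z r2 => g a z * P g (r2 ++ [:: y]) * P g r) A'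
        + (-1) ^+ size A' * P g A' * (g a y * P g r))); last first.
    by move=> y r; rewrite E1 mulrDl -ex_mulr; congr (_ + _); ring.
  rewrite ex_add ex_mull P_cons ex_exchange; congr (_ + _).
  by apply: ex_ext => z r2; rewrite -ex_mull; apply: ex_ext => y r; ring.
have HL2 : L g B (a :: A') = P g (B ++ [:: a]) * P g A'
                  + ex (fun z r => g a z * L g B r) A'.
  rewrite /L /=; congr (_ + _).
  rewrite (@ex_ext _ (fun z r => ex (fun w r' => P g (B ++ [:: z]) * (g a w * P g r')) r)); last first.
    by move=> z r; rewrite P_cons ex_mull.
  rewrite exD_anti opprK; apply: ex_ext => z r; rewrite -ex_mull.
  by apply: ex_ext => w r'; ring.
have HB : P g (B ++ [:: a]) = (-1) ^+ size B * P g (a :: B).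
  by have := P_move g_anti [::] B a [::]; rewrite /= !cats0.
have Hz : ex (fun z r => g a z * (L g r B + L g B r)) A' = 0.
  rewrite -(ex0 A'); apply: ex_split => u y v E.
  rewrite IH ?mulr0 //.
    by move: HA; rewrite E !size_cat /=; lia.
  by move: Hodd; rewrite E !size_cat /= !addnS !addSn /= negbK. 
rewrite HL1 HL2 HB.
have Hs : (-1) ^+ size A' + (-1) ^+ size B = 0 :> R.
  by apply: sign_cancel; move: Hodd; rewrite ?addSn /= ?negbK.
move: Hz; rewrite (@ex_ext _ (fun z r => g a z * L g r B + g a z * L g B r)); last first.
  by move=> z r; rewrite mulrDr.
rewrite ex_add => Hz.
have -> : (-1) ^+ size B = - (-1) ^+ size A' :> R.
  by apply/eqP; rewrite -subr_eq0 opprK addrC Hs.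
rewrite -Hz; ring.
Qed.

End Anti2.


Lemma uniq_mid (p q : seq X) (x : X) : uniq (p ++ x :: q) -> (x \notin p ++ q) && uniq (p ++ q).
Proof. by rewrite -cat1s uniq_catCA cat1s. Qed.

Lemma filter_id_in (pr : pred X) (l : seq X) : {in l, forall z, pr z} -> filter pr l = l.
Proof. by move=> H; apply/all_filterP/allP. Qed.

Lemma wminus_xy (a u v : seq X) (x y : X) : uniq (a ++ x :: u ++ y :: v) ->
  wminus (a ++ x :: u ++ y :: v) [:: x; y] = a ++ u ++ v.
Proof.
case/uniq_mid/andP=> Hx.
have -> : a ++ u ++ y :: v = (a ++ u) ++ y :: v by rewrite catA.
case/uniq_mid/andP=> Hy _.
have Hz : {in a ++ u ++ v, forall z, z \notin [:: x; y]}.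
  move=> z Hz; rewrite !inE; apply/norP; split.
    apply: contraNneq Hx => <-; move: Hz; rewrite !mem_cat !inE.
    by case/or3P=> ->; rewrite ?orbT.
  by apply: contraNneq Hy => <-; rewrite -catA.
rewrite /wminus !filter_cat /= !inE eqxx /= filter_cat /= !inE eqxx orbT /=.
rewrite !filter_id_in // => z Hz'; apply: Hz; rewrite !mem_cat Hz' ?orbT //.
Qed.

Lemma K g (g_anti : forall x y, g x y = - g y x) (g_diag : forall x, g x x = 0) (a s : seq X) (x : X) :
  uniq (a ++ x :: s) -> ~~ odd (size a) -> odd (size s) ->
  ex (fun y _ => P g (wminus (a ++ x :: s) [:: x; y]) * P g (a ++ [:: x; y])) s
  = P g a * P g (a ++ x :: s).
Proof.
move=> Hu Ha Hs.
have HP := @PL g g_anti _ (a ++ [:: x]) (a ++ s) (leqnn _).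
have {HP} := HP _; rewrite !size_cat !oddD /= (negbTE Ha) Hs /=.
move=> /(_ isT).
have Ea : (-1) ^+ size a = 1 :> R by rewrite -signr_odd (negbTE Ha).
rewrite /L !ex_cat Ea !mul1r.
rewrite (@ex_split _ (fun _ _ => 0) a); last first.
  move=> u y v E; rewrite (@P_mem_dup g g_anti g_diag (a ++ [:: x]) y [::]) ?mul0r //.
  by rewrite mem_cat E mem_cat inE eqxx orbT.
rewrite (@ex_split (fun y r => P g ((a ++ s) ++ [:: y]) * P g (r ++ [:: x])) (fun _ _ => 0) a); last first.
  move=> u y v E; rewrite (@P_mem_dup g g_anti g_diag (a ++ s) y [::]) ?mul0r //.
  by rewrite mem_cat E mem_cat inE eqxx orbT.
rewrite ex0 !add0r /= subr0 cats0.
have -> : P g ((a ++ s) ++ [:: x]) = - P g (a ++ x :: s).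
  rewrite -catA (P_move g_anti a s x [::]) cats0 -signr_odd Hs expr1 mulN1r //.
move=> H.
rewrite (@ex_split _ (fun y r => P g ((a ++ [:: x]) ++ [:: y]) * P g (a ++ r)) s).
  by apply/eqP; rewrite -subr_eq0 -H; apply/eqP; ring.
move=> u y v E; rewrite -catA /= mulrC; congr (_ * _); congr (P g _).
by rewrite E wminus_xy // -E.
Qed.


Lemma sq_sign k : (-1) ^+ k * (-1) ^+ k = 1 :> R.
Proof. by rewrite -exprMn mulrNN mulr1 expr1n. Qed.

Lemma prod_const_seq (c : R) (u : seq X) : \prod_(w <- u) c = c ^+ size u.
Proof. by elim: u => [|w u IH]; rewrite ?big_nil ?big_cons ?IH ?exprS. Qed.

Lemma P_scale g h (lam : R) (chi : X -> R) (l : seq X) : uniq l ->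
  (forall c d, c \in l -> d \in l -> c != d -> h c d = lam * chi c * chi d * g c d) ->
  P h l = lam ^+ (size l)./2 * \prod_(w <- l) chi w * P g l.
Proof.
elim: {l}(size l) {-2}l (leqnn (size l)) => [|n IH] [|x s] Hs Hu H;
  try by rewrite big_nil !P_nil expr0 !mul1r.
  by [].
rewrite !P_cons -ex_mull; apply: ex_split => u y v E.
move: Hu; rewrite /= => /andP[Hx Hus].
have Hxy : x != y by apply: contraNneq Hx => ->; rewrite E mem_cat inE eqxx orbT.
rewrite H ?inE ?eqxx ?E ?mem_cat ?inE ?eqxx ?orbT //.
move: (Hus); rewrite E => /uniq_mid/andP[Hy Huv].
rewrite (IH (u ++ v)) //; first last.
- move=> c d Hc Hd Hcd; apply: H => //.
    by rewrite inE E !mem_cat inE; move: Hc; rewrite mem_cat => /orP[]->; rewrite ?orbT.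
  by rewrite inE E !mem_cat inE; move: Hd; rewrite mem_cat => /orP[]->; rewrite ?orbT.
- by move: Hs; rewrite /= E !size_cat /=; lia.
have -> : uphalf (size (u ++ y :: v)) = ((size (u ++ v))./2).+1.
  by rewrite !size_cat /= addnS.
rewrite !big_cons !big_cat /= big_cons exprS; ring.
Qed.

Section Main.
Variable f : X -> X -> R.
Hypothesis f_anti : forall x y, f x y = - f y x.
Hypothesis f_diag : forall x, f x x = 0.

Definition gg (l : seq X) (c d : X) := P f (wminus l [:: c; d]).

Lemma gg_rel (a u v : seq X) (x y c d : X) :
  uniq (a ++ x :: u ++ y :: v) -> c \in u ++ v -> d \in u ++ v -> c != d ->
  gg (a ++ x :: u ++ y :: v) c d =
  (-1) ^+ size u * (-1) ^+ (c \in u) * (-1) ^+ (d \in u) * gg ((a ++ [:: x; y]) ++ u ++ v) c d.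
Proof.
move=> Hu Hc Hd Hcd.
move: (Hu) => /uniq_mid/andP[Hx Hu1].
move: (Hu1); rewrite catA => /uniq_mid/andP[Hy Hu2].
have Huu : uniq u by move: Hu2; rewrite !cat_uniq => /and3P[/and3P[_ _ ->]].
pose pr := fun z => z \notin [:: c; d].
have px : pr x.
  rewrite /pr !inE; apply/norP; split; apply/eqP => E; move: Hx; rewrite E.
    by move: Hc; rewrite !mem_cat inE => /orP[]->; rewrite ?orbT.
  by move: Hd; rewrite !mem_cat inE => /orP[]->; rewrite ?orbT.
have py : pr y.
  rewrite /pr !inE; apply/norP; split; apply/eqP => E; move: Hy; rewrite E.
    by move: Hc; rewrite !mem_cat => /orP[]->; rewrite ?orbT.
  by move: Hd; rewrite !mem_cat => /orP[]->; rewrite ?orbT.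
rewrite /gg /wminus -/pr !filter_cat /= px py /= filter_cat /=.
rewrite py. have -> : [seq z <- a | pr z] ++ x :: [seq z <- u | pr z] ++ y :: [seq z <- v | pr z]
  = ([seq z <- a | pr z] ++ [:: x]) ++ [seq z <- u | pr z] ++ y :: [seq z <- v | pr z].
  by rewrite -catA.
rewrite (P_move f_anti) -!catA /=; congr (_ * _).
have Hsz : size u = (size [seq z <- u | pr z] + (c \in u) + (d \in u))%N.
  rewrite size_filter -(count_predC pr u) -addnA; congr (_ + _)%N.
  rewrite -(count_uniq_mem c Huu) -(count_uniq_mem d Huu) -count_predUI.
  rewrite (@eq_count _ (predI _ _) pred0) ?count_pred0 ?addn0.
    by apply: eq_count => z; rewrite /pr /= negbK !inE.
  by move=> z /=; apply/andP => -[/eqP -> /eqP E]; rewrite E eqxx in Hcd.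
rewrite Hsz !exprD.
set A := (-1) ^+ size _; set B := (-1) ^+ (c \in u); set C := (-1) ^+ (d \in u).
have B2 : B * B = 1 by apply: sq_sign.
have C2 : C * C = 1 by apply: sq_sign.
rewrite [RHS](_ : _ = A * (B * B) * (C * C)); last by ring.
by rewrite B2 C2 !mulr1.
Qed.

Lemma main_P n (a b : seq X) : uniq (a ++ b) -> ~~ odd (size a) ->
  size b = (2 * n.+1)%N ->
  P f a * P f (a ++ b) ^+ n = P (gg (a ++ b)) b.
Proof.
elim: n a b => [|n IH] a b Hu Ha Hb.
  case: b Hb Hu => [|x [|y [|? ?]]] // _ Hu.
  rewrite P_cons /= P_nil subr0 mulr1 expr0 mulr1 /gg.
  by have := wminus_xy (u := [::]) (v := [::]) Hu; rewrite /= cats0 => ->.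
case: b Hb Hu => [|x s] // Hb Hu.
rewrite P_cons exprS mulrA.
have Hs : size s = (2 * n.+1).+1 by move: Hb => /= [->]; lia.
rewrite -(K f_anti f_diag Hu Ha) -?ex_mulr; last by rewrite Hs -addn1 oddD oddM.
apply: ex_split => u y v E.
rewrite -mulrA; congr (_ * _).
move: (Hu); rewrite E => Hu'.
have Hperm : perm_eq ((a ++ [:: x; y]) ++ u ++ v) (a ++ x :: u ++ y :: v).
  rewrite -catA perm_cat2l /= perm_cons -cat1s.
  by rewrite perm_catCA.
have Hu2 : uniq ((a ++ [:: x; y]) ++ u ++ v) by rewrite (perm_uniq Hperm).
have Hsuv : size (u ++ v) = (2 * n.+1)%N.
  by move: Hs; rewrite E !size_cat /=; lia.
have Ha2 : ~~ odd (size (a ++ [:: x; y])) by rewrite size_cat addn2 /= negbK.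
have IH' := IH _ _ Hu2 Ha2 Hsuv.
have Hg : P f (a ++ x :: u ++ y :: v) = (-1) ^+ size u * P f ((a ++ [:: x; y]) ++ u ++ v).
  have -> : a ++ x :: u ++ y :: v = (a ++ [:: x]) ++ u ++ y :: v by rewrite -catA.
  by rewrite (P_move f_anti) -!catA.
rewrite (@P_scale (gg ((a ++ [:: x; y]) ++ u ++ v)) _ ((-1) ^+ size u)
           (fun w => (-1) ^+ (w \in u)) (u ++ v)) //; last first.
- by move=> c d Hc Hd Hcd; apply: gg_rel.
- by move: Hu2; rewrite cat_uniq => /and3P[].
rewrite -IH' Hg Hsuv mul2n half_double big_cat /=.
have Hv : \prod_(w <- v) (-1) ^+ (w \in u) = 1 :> R.
  rewrite big1_seq // => w /andP[_ wv].
  suff -> : (w \in u) = false by rewrite expr0.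
  apply/negbTE; move: Hu2; rewrite cat_uniq => /and3P[_ _].
  rewrite cat_uniq => /and3P[_ /hasPn H _].
  exact: H.
have Hu3 : \prod_(w <- u) (-1) ^+ (w \in u) = (-1) ^+ size u :> R.
  by rewrite (eq_big_seq (fun _ => -1)) ?prod_const_seq // => w ->; rewrite expr1.
rewrite Hv Hu3 mulr1.
set e := (-1) ^+ size u.
have E2 : e * e = 1 by apply: sq_sign.
rewrite exprMn exprS.
transitivity (P f (a ++ [:: x; y]) * (e ^+ n * P f ((a ++ [:: x; y]) ++ u ++ v) ^+ n) * (e * e)).
  by rewrite E2 mulr1.
ring.
Qed.

End Main.

Lemma inv_cmp (l1 l2 w : seq X) :
  {in w &, forall z1 z2, (index z1 l1 < index z2 l1)%N = (index z1 l2 < index z2 l2)%N} ->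
  inversions l1 w = inversions l2 w.
Proof.
elim: w => [|x w IH] //= H.
congr (_ + _)%N.
  apply: eq_in_count => z zw /=; apply: H; by rewrite inE ?zw ?eqxx ?orbT.
by apply: IH => z1 z2 H1 H2; apply: H; rewrite inE ?H1 ?H2 orbT.
Qed.

Lemma match_perm k (l m : seq X) : (size l <= k)%N -> m \in matchings_aux k l -> perm_eq m l.
Proof.
elim: k l m => [|k IH] [|x s] m //=; rewrite ?inE => Hs.
- by move/eqP->.
- by move/eqP->.
case/flattenP=> t /mapP[y ys ->] /mapP[m' Hm' ->].
rewrite perm_cons.
apply: (@perm_trans _ (y :: rem y s)); last by rewrite perm_sym perm_to_rem.
rewrite perm_cons; apply: IH Hm'.
by rewrite size_rem //; move: Hs; rewrite ltnS; apply: leq_trans; apply: leq_pred.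
Qed.

Lemma sgn_perm (l m : seq X) : uniq l -> perm_eq m l -> sgn R l m = (-1) ^+ inversions l m.
Proof.
move=> Hu pm; rewrite /sgn (perm_uniq pm) Hu /=.
have -> : all (fun y => y \in l) m by apply/allP => z; rewrite (perm_mem pm).
have -> : wminus l m = [::].
  rewrite /wminus (@eq_in_filter _ _ pred0) ?filter_pred0 // => z zl.
  by rewrite /= (perm_mem pm) zl.
by rewrite cats0.
Qed.

Lemma rem_mid (u v : seq X) (y : X) : y \notin u -> rem y (u ++ y :: v) = u ++ v.
Proof.
elim: u => [|w u IH] /=; first by rewrite eqxx.
rewrite inE negb_or => /andP[Hw Hu]; rewrite eq_sym (negbTE Hw) IH //.
Qed.

Lemma index_cons_neq (x z : X) (s : seq X) : z != x -> index z (x :: s) = (index z s).+1.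
Proof. by move=> H; rewrite /= eq_sym (negbTE H). Qed.

Lemma sgn_step (x y : X) (s m : seq X) : uniq (x :: s) -> y \in s -> perm_eq m (rem y s) ->
  sgn R (x :: s) (x :: y :: m) = (-1) ^+ index y s * sgn R (rem y s) m.
Proof.
move=> Hu ys pm.
have pm2 : perm_eq (x :: y :: m) (x :: s).
  rewrite perm_cons; apply: (@perm_trans _ (y :: rem y s)); last by rewrite perm_sym perm_to_rem.
  by rewrite perm_cons.
rewrite !sgn_perm //; last by apply: rem_uniq; case/andP: Hu.
rewrite -exprD; congr (_ ^+ _).
move: Hu pm pm2; case/splitPr: ys => u v Hu pm pm2.
move: (Hu) => /= /andP[Hx Huyv].
move: (Huyv) => /uniq_mid/andP[Hy Huv].
have Hyu : y \notin u by apply: contra Hy; rewrite mem_cat => ->.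
rewrite rem_mid // in pm *.
have Hidx : index y (u ++ y :: v) = size u by rewrite index_cat (negbTE Hyu) /= eqxx addn0.
rewrite Hidx /=.
have Hm : forall z, z \in m -> z \in u ++ v by move=> z; rewrite (perm_mem pm).
have Hzx : forall z, z \in m -> z != x.
  move=> z /Hm zuv; apply: contraNneq Hx => <-.
  by move: zuv; rewrite !mem_cat inE => /orP[]->; rewrite ?orbT.
have Hzy : forall z, z \in m -> z != y.
  by move=> z /Hm zuv; apply: contraNneq Hy => <-.
have F : forall z, z \in m ->
   ((z \in u) /\ index z (u ++ y :: v) = index z u /\ index z (u ++ v) = index z u
      /\ (index z u < size u)%N) \/
   ((z \notin u) /\ index z (u ++ y :: v) = (size u + index z v).+1 /\ index z (u ++ v) = (size u + index z v)%N).
  move=> z zm; rewrite !index_cat.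
  case zu: (z \in u); first by left; rewrite index_mem.
  by right; rewrite index_cons_neq ?Hzy // addnS.
have xy : (x == y) = false.
  by apply/negbTE; apply: contraNneq Hx => ->; rewrite mem_cat inE eqxx orbT.
rewrite eqxx xy ltn0 add0n.
rewrite (@eq_in_count _ _ pred0); last first.
  by move=> z zm /=; rewrite ltn0.
rewrite count_pred0 add0n.
congr (_ + _)%N.
  rewrite (@eq_in_count _ _ (fun z => z \in u)); last first.
    move=> z zm /=; rewrite eq_sym (negbTE (Hzx z zm)) ltnS.
    case: (F z zm) => [[-> [-> [_ ->]]] | [Hzu [-> _]]] //.
    by rewrite (negbTE Hzu); apply/negbTE; rewrite -leqNgt; lia.
  rewrite (permP pm) count_cat.
  rewrite (@eq_in_count _ _ predT u) ?count_predT; last by move=> z ->.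
  rewrite (@eq_in_count _ _ pred0 v) ?count_pred0 ?addn0 // => z zv /=.
  apply/negbTE; move: Huv; rewrite cat_uniq => /and3P[_ /hasPn H _]; exact: H.
apply: inv_cmp => z1 z2 H1 H2.
rewrite !index_cons_neq ?Hzx // !ltnS.
case: (F z1 H1) => [[_ [-> [-> Hs1]]] | [_ [-> ->]]];
case: (F z2 H2) => [[_ [-> [-> Hs2]]] | [_ [-> ->]]] //; lia.
Qed.

Lemma match_sum (g : X -> X -> R) k (l : seq X) : uniq l -> (size l <= k)%N ->
  \sum_(m <- matchings_aux k l) sgn R l m * \prod_(p <- pairs_of m) g p.1 p.2 = P g l.
Proof.
elim: k l => [|k IH] [|x s] //= Hu Hs;
  try by rewrite big_cons big_nil /sgn /= big_nil mulr1 addr0 P_nil.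
rewrite big_flatten /= big_map P_cons (ex_index _ (proj2 (andP Hu))).
apply: eq_big_seq => y ys.
rewrite big_map.
rewrite (@eq_big_seq _ _ _ _ _ _ (fun m => (-1) ^+ index y s * g x y *
            (sgn R (rem y s) m * \prod_(p <- pairs_of m) g p.1 p.2))); last first.
  move=> m Hm; rewrite sgn_step //; last first.
    apply: match_perm Hm.
    by rewrite size_rem //; move: Hs => /=; lia.
  by rewrite /= big_cons /=; ring.
rewrite -big_distrr /= IH //.
- by rewrite mulrA.
- by apply: rem_uniq; case/andP: Hu.
- by rewrite size_rem //; move: Hs => /=; lia.
Qed.

Lemma pfP (g : X -> X -> R) (l : seq X) : uniq l -> pf g l = P g l.
Proof.
move=> Hu; rewrite /pf Hu /=.
case: (boolP (odd (size l))) => Ho /=; first by rewrite P_odd.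
exact: match_sum.
Qed.

End Dev.

Theorem mainTheorem4 (X : eqType) (R : comPzRingType) (f : X -> X -> R)
  (f_anti : forall x y, f x y = - f y x) (f_diag : forall x, f x x = 0)
  (a b : seq X) (n : nat)
  (huniq : uniq (a ++ b)) (ha : ~~ odd (size a))
  (hb : size b = (2 * n)%N) (hn : (1 <= n)%N) :
  pf f a * pf f (a ++ b) ^+ n.-1 =
  \sum_(m <- matchings b)
     sgn R b m * \prod_(p <- pairs_of m) pf f (wminus (a ++ b) [:: p.1; p.2]).
Proof.
have Hua : uniq a by move: huniq; rewrite cat_uniq => /and3P[].
have Hub : uniq b by move: huniq; rewrite cat_uniq => /and3P[].
rewrite !pfP //.
rewrite (@match_sum X R (fun c d => pf f (wminus (a ++ b) [:: c; d])) (size b) b Hub (leqnn _)).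
rewrite (@P_ext X R _ (gg f (a ++ b)) b); last first.
  by move=> c d /=; rewrite /gg pfP // /wminus filter_uniq.
case: n hb hn => [|n] // hb _.
exact: main_P.
Qed.
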